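(* Let $f\in\bar U_{NP}$ with partition spacing constant $\Xi$, let $\iota\in I$ and $\sigma\in\{-1,1\}$ be such that $v_\iota(\sigma)\notin\{-1,1\}$. Let $\tau_{\iota,\sigma}=\sigma\,\mathrm{sgn}\,v_\iota'(0)$ and $T_{\iota,\sigma}(x)=1-v_\iota(x)/\tau_{\iota,\sigma}$. Then $T_{\iota,\sigma}(x)\ge\Xi^{-1}|\mathcal{O}_\iota|$ for all $x\in[-1,1]$. If moreover $f$ satisfies the analytic distortion condition $(\mathrm{AD}_\delta)$, then there exist $\zeta\in(0,\delta]$ and $\mathfrak{K}_\zeta>0$ such that $|T_{\iota,\sigma}(z)|\ge\mathfrak{K}_\zeta|\mathcal{O}_\iota|$ for all $z\in\check\Lambda_\zeta$.
   Context: Class $\bar U_{NP}$: full-branch Markov maps $f$ of $[-1,1]$: disjoint open intervals $\mathcal{O}_\iota$, $\iota\in I$ ($I$ countable), covering $[-1,1]$ up to a countable set, with $f|_{\mathcal{O}_\iota}$ extending to a $C^2$ bijection $\hat f_\iota:\overline{\mathcal{O}_\iota}\to[-1,1]$ and $v_\iota=\hat f_\iota^{-1}$; required: $\sup_{\iota,x}|v_\iota''/v_\iota'|<\infty$, $\inf_{x\in\cup\mathcal{O}_\iota}\frac{\sqrt{1-x^2}}{\sqrt{1-f(x)^2}}|f'(x)|>0$, and partition spacing constant $\Xi:=\sup\{|\mathcal{O}_\iota|/d(\mathcal{O}_\iota,\sigma):\iota\in I,\sigma\in\{\pm1\},\sigma\notin\overline{\mathcal{O}_\iota}\}<\infty$.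 $\check\Lambda_\zeta$ denotes the closed region bounded by the Bernstein ellipse of parameter $e^\zeta$ (centre $0$, semi-axes $\cosh\zeta$ along $\mathbb{R}$ and $\sinh\zeta$ along $i\mathbb{R}$). $(\mathrm{AD}_\delta)$: each $v_\iota$ is holomorphic on $\check\Lambda_\delta$ and $\sup_{\iota,z\in\check\Lambda_\delta}|v_\iota''(z)/v_\iota'(z)|<\infty$. *)

(* Defs.v *)
From Stdlib Require Import Reals Lra.
From Coquelicot Require Import Coquelicot.
Open Scope R_scope.
Set Implicit Arguments.
Unset Strict Implicit.

Definition sgn (x : R) : R :=
  if Rlt_dec 0 x then 1 else if Rlt_dec x 0 then -1 else 0.

Definition cont_within (g : R -> R) (a b x : R) : Prop :=
  filterlim g (within (fun y => a <= y <= b) (locally x)) (locally (g x)).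

Definition C2_closed (g : R -> R) (a b : R) : Prop :=
  exists g1 g2 : R -> R,
    (forall x, a < x < b -> is_derive g x (g1 x) /\ is_derive g1 x (g2 x)) /\
    (forall x, a <= x <= b ->
       cont_within g a b x /\ cont_within g1 a b x /\ cont_within g2 a b x).

Definition bij_onto_I (g : R -> R) (a b : R) : Prop :=
  (forall x, a <= x <= b -> -1 <= g x <= 1) /\
  (forall x y, a <= x <= b -> a <= y <= b -> g x = g y -> x = y) /\
  (forall y, -1 <= y <= 1 -> exists x, a <= x <= b /\ g x = y).

(** The partition element O_i is the open interval
    (a i, b i); fh i is the C^2 extension \hat f_i of f|O_i to its closure,
    and v i = (\hat f_i)^{-1} : [-1,1] -> closure O_i. *)
Definition UNP (I : Type) (a b : I -> R) (f : R -> R) (fh v : I -> R -> R) : Prop :=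
  (exists c : I -> nat, forall i j, c i = c j -> i = j) /\
  (forall i, -1 <= a i /\ a i < b i /\ b i <= 1) /\
  (forall i j x, a i < x < b i -> a j < x < b j -> i = j) /\
  (exists s : nat -> R, forall x, -1 <= x <= 1 ->
      (exists i, a i < x < b i) \/ (exists n, s n = x)) /\
  (forall i x, a i < x < b i -> fh i x = f x) /\
  (forall i, C2_closed (fh i) (a i) (b i)) /\
  (forall i, bij_onto_I (fh i) (a i) (b i)) /\
  (forall i y, -1 <= y <= 1 -> a i <= v i y <= b i /\ fh i (v i y) = y) /\
  (exists M, forall i x, -1 < x < 1 ->
      ex_derive (v i) x /\ ex_derive (Derive (v i)) x /\ Derive (v i) x <> 0 /\
      Rabs (Derive (Derive (v i)) x / Derive (v i) x) <= M) /\
  (exists c, 0 < c /\ forall i x, a i < x < b i ->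
      c <= sqrt (1 - x ^ 2) / sqrt (1 - (f x) ^ 2) * Rabs (Derive f x)).

Definition dist_int (a b s : R) : R := Rmin (Rabs (s - a)) (Rabs (s - b)).

Definition spacing_ratios (I : Type) (a b : I -> R) (r : R) : Prop :=
  exists i s, (s = 1 \/ s = -1) /\ ~ (a i <= s <= b i) /\
              r = (b i - a i) / dist_int (a i) (b i) s.

Definition spacing_const (I : Type) (a b : I -> R) (Xi : R) : Prop :=
  is_lub (spacing_ratios a b) Xi.

(** closed region bounded by the Bernstein ellipse of parameter e^zeta *)
Definition Lambda (zeta : R) (z : C) : Prop :=
  (Re z / cosh zeta) ^ 2 + (Im z / sinh zeta) ^ 2 <= 1.

Definition AD (I : Type) (v : I -> R -> R) (vC : I -> C -> C) (delta : R) : Prop :=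
  (forall i x, -1 <= x <= 1 -> vC i (RtoC x) = RtoC (v i x)) /\
  exists d1 d2 : I -> C -> C,
    (forall i, exists U : C -> Prop, open U /\ (forall z, Lambda delta z -> U z) /\
       forall z, U z ->
         @is_derive C_AbsRing C_NormedModule (vC i) z (d1 i z) /\
         @is_derive C_AbsRing C_NormedModule (d1 i) z (d2 i z)) /\
    (exists M, forall i z, Lambda delta z ->
       d1 i z <> RtoC 0 /\ Cmod (Cdiv (d2 i z) (d1 i z)) <= M).

Definition tau (I : Type) (v : I -> R -> R) (i : I) (s : R) : R :=
  s * sgn (Derive (v i) 0).

Definition T (I : Type) (v : I -> R -> R) (i : I) (s x : R) : R :=
  1 - v i x / tau v i s.

(* Main.v *)
Require Import Defs.
From Stdlib Require Import Reals.
From Coquelicot Require Import Coquelicot.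
From Stdlib Require Import Lra Classical.
Open Scope R_scope.


Definition HCont (h : R -> R) (A B : R) := forall x, A <= x <= B -> forall eps, 0 < eps ->
  exists d, 0 < d /\ forall y, A <= y <= B -> Rabs (y - x) < d -> Rabs (h y - h x) < eps.

Lemma hcont_of (h : R -> R) A B : (forall x, A <= x <= B -> cont_within h A B x) -> HCont h A B.
Proof.
  intros Hc x Hx eps He.
  specialize (Hc x Hx). unfold cont_within in Hc.
  assert (Hl : locally (h x) (ball (h x) (mkposreal eps He))) by apply locally_ball.
  specialize (Hc _ Hl). simpl in Hc. unfold within in Hc.
  destruct Hc as [d Hd]. exists d. split; [apply cond_pos|].
  intros y Hy Hyx. specialize (Hd y). 
  assert (Hb : ball x d y) by (unfold ball; simpl; unfold AbsRing_ball, abs, minus, plus, opp; simpl; exact Hyx).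
  specialize (Hd Hb Hy). unfold ball in Hd; simpl in Hd; unfold AbsRing_ball, abs, minus, plus, opp in Hd; simpl in Hd.
  exact Hd.
Qed.

Lemma hcont_pt (h : R -> R) A B x : HCont h A B -> A < x < B -> continuity_pt h x.
Proof.
  intros Hc Hx eps He.
  destruct (Hc x ltac:(lra) eps He) as [d [Hd Hy]].
  exists (Rmin d (Rmin (x - A) (B - x))). split.
  { apply Rmin_pos; [lra| apply Rmin_pos; lra]. }
  intros y [_ Hyd]. unfold R_dist in *. simpl in *. unfold R_dist in *.
  pose proof (Rmin_l d (Rmin (x - A) (B - x))).
  pose proof (Rmin_r d (Rmin (x - A) (B - x))).
  pose proof (Rmin_l (x - A) (B - x)). pose proof (Rmin_r (x - A) (B - x)).
  apply Hy; [|lra].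
  destruct (Rabs_def2 _ _ Hyd). lra.
Qed.

Lemma ivt_zero (g : R -> R) a b : a <= b -> (forall t, a <= t <= b -> continuity_pt g t) ->
  g a * g b <= 0 -> exists z, a <= z <= b /\ g z = 0.
Proof.
  intros Hab Hc Hp.
  destruct (Req_dec (g a) 0) as [Ha|Ha]. { exists a; split; [lra|auto]. }
  destruct (Req_dec (g b) 0) as [Hb|Hb]. { exists b; split; [lra|auto]. }
  assert (Hab' : a < b). { destruct (Req_dec a b); [subst; nra | lra]. }
  destruct (Rlt_dec (g a) 0) as [Hn|Hn].
  - assert (0 < g b) by nra.
    destruct (Ranalysis5.IVT_interv g a b Hc Hab' Hn H) as [z [Hz Hz']]. exists z; auto.
  - assert (Hga : 0 < g a) by lra. assert (Hgb : g b < 0) by nra.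
    destruct (Ranalysis5.IVT_interv (fun t => - g t) a b) as [z [Hz Hz']]; auto.
    + intros t Ht. apply continuity_pt_opp. auto.
    + lra.
    + lra.
    + exists z. split; auto. lra.
Qed.

Lemma endpoint (h v : R -> R) A B : A < B ->
  (forall y, -1 <= y <= 1 -> A <= v y <= B /\ h (v y) = y) ->
  (forall x y, A <= x <= B -> A <= y <= B -> h x = h y -> x = y) ->
  (forall x, A <= x <= B -> -1 <= h x <= 1) ->
  HCont h A B ->
  (forall x y, -1 < x -> x < y -> y < 1 -> v x < v y) ->
  v 1 = B.
Proof.
  intros HAB Hv Hinj Hrng Hc Hinc.
  set (yB := h B).
  assert (HyB : -1 <= yB <= 1) by (apply Hrng; lra).
  assert (HvB : v yB = B).
  { destruct (Hv yB HyB) as [H1 H2]. apply Hinj; auto; lra. }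
  destruct (Req_dec yB 1) as [E|E]. { rewrite <- E; auto. }
  destruct (Req_dec yB (-1)) as [E'|E'].
  - exfalso.
    destruct (Hv 0 ltac:(lra)) as [Hp1 Hp2].
    destruct (Hv (1/2) ltac:(lra)) as [Hq1 Hq2].
    assert (Hpq : v 0 < v (1/2)) by (apply Hinc; lra).
    assert (HqB : v (1/2) <> B).
    { intro HH. rewrite HH in Hq2. unfold yB in E'. lra. }
    destruct (Hc B ltac:(lra) 1 ltac:(lra)) as [d [Hd Hdy]].
    set (B' := Rmax ((v (1/2) + B)/2) (B - d/2)).
    assert (HB'1 : (v (1/2) + B)/2 <= B') by apply Rmax_l.
    assert (HB'2 : B - d/2 <= B') by apply Rmax_r.
    assert (HB'3 : B' < B) by (unfold B'; apply Rmax_lub_lt; lra).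
    assert (HhB' : h B' < 0).
    { specialize (Hdy B' ltac:(lra) ltac:(rewrite Rabs_left; lra)).
      fold yB in Hdy. rewrite E' in Hdy. destruct (Rabs_def2 _ _ Hdy). lra. }
    destruct (ivt_zero h (v (1/2)) B') as [r [Hr Hr']].
    + lra.
    + intros t Ht. apply (hcont_pt h A B); auto; lra.
    + rewrite Hq2. nra.
    + assert (r = v 0) by (apply Hinj; try lra; congruence). lra.
  - exfalso.
    assert (Hin : -1 < (yB + 1)/2 < 1) by lra.
    destruct (Hv ((yB+1)/2) ltac:(lra)) as [H1 _].
    assert (v yB < v ((yB+1)/2)) by (apply Hinc; lra). lra.
Qed.

Lemma deriv_mono (v : R -> R) :
  (forall x, -1 < x < 1 -> ex_derive v x /\ ex_derive (Derive v) x /\ Derive v x <> 0) ->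
  forall x y, -1 < x -> x < y -> y < 1 -> 0 < (v y - v x) * Derive v 0.
Proof.
  intros Hd.
  assert (Hcont : forall t, -1 < t < 1 -> continuity_pt (Derive v) t).
  { intros t Ht. apply continuity_pt_filterlim. apply (ex_derive_continuous (Derive v)). apply Hd; auto. }
  assert (Hsg : forall t, -1 < t < 1 -> 0 < Derive v t * Derive v 0).
  { intros t Ht. destruct (Rlt_dec 0 (Derive v t * Derive v 0)) as [P|P]; auto. exfalso.
    destruct (ivt_zero (Derive v) (Rmin t 0) (Rmax t 0)) as [z [Hz Hz']].
    - apply Rle_trans with t; [apply Rmin_l | apply Rmax_l].
    - intros u Hu. apply Hcont. assert (-1 < Rmin t 0) by (apply Rmin_glb_lt; lra).
      assert (Rmax t 0 < 1) by (apply Rmax_lub_lt; lra). lra.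
    - destruct (Rle_dec t 0) as [Ht0|Ht0]; [rewrite Rmin_left, Rmax_right by lra | rewrite Rmin_right, Rmax_left by lra]; nra.
    - assert (-1 < z < 1).
      { assert (-1 < Rmin t 0) by (apply Rmin_glb_lt; lra).
        assert (Rmax t 0 < 1) by (apply Rmax_lub_lt; lra). lra. }
      destruct (Hd z H) as [_ [_ HH]]. auto. }
  intros x y Hx Hxy Hy.
  destruct (MVT_cor2 v (Derive v) x y Hxy) as [c [Hc Hc']].
  { intros c Hc. apply is_derive_Reals. apply Derive_correct. apply Hd. lra. }
  rewrite Hc. specialize (Hsg c ltac:(lra)). nra.
Qed.

Lemma hc_arg (h : R -> R) A B : HCont h A B -> HCont (fun x => h (- x)) (-B) (-A).
Proof.
  intros Hc x Hx eps He. destruct (Hc (-x) ltac:(lra) eps He) as [d [Hd H]].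
  exists d. split; auto. intros y Hy Hyx. apply H; [lra|].
  replace (-y - -x) with (-(y-x)) by ring. rewrite Rabs_Ropp; auto.
Qed.

Lemma hc_neg (h : R -> R) A B : HCont h A B -> HCont (fun x => - h x) A B.
Proof.
  intros Hc x Hx eps He. destruct (Hc x Hx eps He) as [d [Hd H]].
  exists d. split; auto. intros y Hy Hyx.
  replace (- h y - - h x) with (-(h y - h x)) by ring. rewrite Rabs_Ropp; auto.
Qed.

Lemma ratio (I : Type) (a b : I -> R) Xi i s : spacing_const a b Xi -> (s = 1 \/ s = -1) ->
  ~ (a i <= s <= b i) -> a i < b i -> 0 < Xi /\ (b i - a i) / Xi <= dist_int (a i) (b i) s.
Proof.
  intros [Hub _] Hs Hn Hab.
  assert (HD : 0 < dist_int (a i) (b i) s).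
  { unfold dist_int. apply Rmin_pos; apply Rabs_pos_lt; intro; apply Hn; lra. }
  set (r := (b i - a i) / dist_int (a i) (b i) s).
  assert (Hr : 0 < r) by (apply Rdiv_lt_0_compat; lra).
  assert (Hrx : r <= Xi) by (apply Hub; exists i, s; repeat split; auto).
  split; [lra|].
  apply Rle_trans with ((b i - a i) / r).
  - unfold Rdiv. apply Rmult_le_compat_l; [lra|]. apply Rinv_le_contravar; auto.
  - unfold r. right. field. split; lra.
Qed.

Lemma fin1 (I : Type) (a b : I -> R) Xi i (v : R -> R) tau :
  spacing_const a b Xi -> a i < b i -> b i < 1 -> tau = 1 ->
  forall x, v x <= b i -> (b i - a i) / Xi <= 1 - v x / tau.
Proof.
  intros HS Hab Hb Ht x Hx.
  destruct (@ratio I a b Xi i 1 HS ltac:(auto) ltac:(lra) Hab) as [HX Hr].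
  unfold dist_int in Hr. rewrite (Rabs_right (1 - a i)), (Rabs_right (1 - b i)), Rmin_right in Hr by lra.
  rewrite Ht. lra.
Qed.

Lemma fin2 (I : Type) (a b : I -> R) Xi i (v : R -> R) tau :
  spacing_const a b Xi -> a i < b i -> -1 < a i -> tau = -1 ->
  forall x, a i <= v x -> (b i - a i) / Xi <= 1 - v x / tau.
Proof.
  intros HS Hab Hb Ht x Hx.
  destruct (@ratio I a b Xi i (-1) HS ltac:(auto) ltac:(lra) Hab) as [HX Hr].
  unfold dist_int in Hr. rewrite (Rabs_left (-1 - a i)), (Rabs_left (-1 - b i)), Rmin_left in Hr by lra.
  rewrite Ht. replace (v x / -1) with (- v x) by field. lra.
Qed.

Lemma part1_one (I : Type) (a b : I -> R) (Xi : R) (i : I) (h v : R -> R) s :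
  spacing_const a b Xi ->
  a i < b i ->
  (forall y, -1 <= y <= 1 -> a i <= v y <= b i /\ h (v y) = y) ->
  (forall x y, a i <= x <= b i -> a i <= y <= b i -> h x = h y -> x = y) ->
  (forall x, a i <= x <= b i -> -1 <= h x <= 1) ->
  (forall x, a i <= x <= b i -> cont_within h (a i) (b i) x) ->
  (forall x, -1 < x < 1 -> ex_derive v x /\ ex_derive (Derive v) x /\ Derive v x <> 0) ->
  (s = 1 \/ s = -1) -> v s <> 1 -> v s <> -1 -> -1 <= a i -> b i <= 1 ->
  forall x, -1 <= x <= 1 -> (b i - a i) / Xi <= 1 - v x / (s * sgn (Derive v 0)).
Proof.
  intros HS Hab Hv Hinj Hrng Hcw Hd Hs Hv1 Hv2 HA1 HB1 x Hx.
  set (A := a i) in *. set (B := b i) in *.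
  assert (Hc : HCont h A B) by (apply hcont_of; auto).
  pose proof (deriv_mono v Hd) as Hm.
  assert (HD0 : Derive v 0 <> 0) by (apply Hd; lra).
  destruct (Hv x Hx) as [[Hx1 Hx2] _].
  destruct (Rlt_dec 0 (Derive v 0)) as [Hp|Hp].
  - assert (Hsg : sgn (Derive v 0) = 1) by (unfold sgn; destruct (Rlt_dec 0 (Derive v 0)); lra).
    rewrite Hsg.
    assert (Hinc : forall x y, -1 < x -> x < y -> y < 1 -> v x < v y).
    { intros x0 y0 H1 H2 H3. specialize (Hm x0 y0 H1 H2 H3). nra. }
    assert (E1 : v 1 = B) by (apply (endpoint h v A B); auto).
    assert (E2 : (fun y => - v (- y)) 1 = - A).
    { apply (endpoint (fun x => - h (- x)) (fun y => - v (- y)) (-B) (-A)).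
      - lra.
      - intros y Hy. destruct (Hv (-y) ltac:(lra)) as [[H1 H2] H3]. rewrite Ropp_involutive, H3. split; lra.
      - intros x0 y0 H1 H2 H3. assert (- x0 = - y0) by (apply Hinj; lra). lra.
      - intros x0 H1. specialize (Hrng (-x0) ltac:(lra)). lra.
      - apply hc_neg. apply hc_arg. auto.
      - intros x0 y0 H1 H2 H3. specialize (Hinc (-y0) (-x0) ltac:(lra) ltac:(lra) ltac:(lra)). lra. }
    simpl in E2. replace (-(1)) with (-1) in E2 by ring.
    destruct Hs as [-> | ->].
    + assert (B < 1) by (destruct (Req_dec B 1); [congruence | lra]).
      apply (@fin1 I a b Xi i v); auto; try ring.
    + assert (-1 < A) by (destruct (Req_dec A (-1)); [assert (v (-1) = -1) by lra; congruence | lra]).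
      apply (@fin2 I a b Xi i v); auto; try ring.
  - assert (Hn : Derive v 0 < 0) by lra.
    assert (Hsg : sgn (Derive v 0) = -1) by (unfold sgn; destruct (Rlt_dec 0 (Derive v 0)); [lra|]; destruct (Rlt_dec (Derive v 0) 0); lra).
    rewrite Hsg.
    assert (Hdec : forall x y, -1 < x -> x < y -> y < 1 -> v y < v x).
    { intros x0 y0 H1 H2 H3. specialize (Hm x0 y0 H1 H2 H3). nra. }
    assert (E1 : (fun y => v (- y)) 1 = B).
    { apply (endpoint (fun x => - h x) (fun y => v (- y)) A B).
      - lra.
      - intros y Hy. destruct (Hv (-y) ltac:(lra)) as [[H1 H2] H3]. rewrite H3. split; lra.
      - intros x0 y0 H1 H2 H3. apply Hinj; lra.
      - intros x0 H1. specialize (Hrng x0 H1). lra.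
      - apply hc_neg. auto.
      - intros x0 y0 H1 H2 H3. apply Hdec; lra. }
    assert (E2 : (fun y => - v y) 1 = - A).
    { apply (endpoint (fun x => h (- x)) (fun y => - v y) (-B) (-A)).
      - lra.
      - intros y Hy. destruct (Hv y Hy) as [[H1 H2] H3]. rewrite Ropp_involutive, H3. split; lra.
      - intros x0 y0 H1 H2 H3. assert (- x0 = - y0) by (apply Hinj; lra). lra.
      - intros x0 H1. apply Hrng; lra.
      - apply hc_arg. auto.
      - intros x0 y0 H1 H2 H3. specialize (Hdec x0 y0 H1 H2 H3). lra. }
    simpl in E1, E2. replace (-(1)) with (-1) in E1 by ring.
    destruct Hs as [-> | ->].
    + assert (-1 < A) by (destruct (Req_dec A (-1)); [assert (v 1 = -1) by lra; congruence | lra]).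
      apply (@fin2 I a b Xi i v); auto; try ring.
    + assert (B < 1) by (destruct (Req_dec B 1); [assert (v (-1) = 1) by lra; congruence | lra]).
      apply (@fin1 I a b Xi i v); auto; try ring.
Qed.
Lemma Cmod_le_sum (x : C) : Cmod x <= Rabs (fst x) + Rabs (snd x).
Proof.
  destruct x as [a b]; unfold Cmod; simpl.
  rewrite <- (sqrt_Rsqr (Rabs a + Rabs b)) by (pose proof (Rabs_pos a); pose proof (Rabs_pos b); lra).
  apply sqrt_le_1_alt. unfold Rsqr.
  pose proof (Rabs_pos a); pose proof (Rabs_pos b).
  replace (a*(a*1)) with (Rabs a * Rabs a) by (rewrite <- Rabs_mult; rewrite Rabs_right; [ring| nra]).
  replace (b*(b*1)) with (Rabs b * Rabs b) by (rewrite <- Rabs_mult; rewrite Rabs_right; [ring| nra]).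
  nra.
Qed.

Lemma seg_gen (f : C -> C) (l : C) (p1 p2 w1 w2 t0 : R) (pi : C -> R) L :
  (forall x : C, Rabs (pi x) <= Cmod x) ->
  (forall F F0 : C, forall h, pi (Cplus (Cplus F (Copp F0)) (Copp (Cmult (h*w1, h*w2) l))) = pi F - pi F0 - h * L) ->
  @is_derive C_AbsRing C_NormedModule f (p1 + t0*w1, p2 + t0*w2) l ->
  derivable_pt_lim (fun t => pi (f (p1 + t*w1, p2+t*w2))) t0 L.
Proof.
  intros Hpi Hlin [_ Hd].
  specialize (Hd _ (fun P HP => HP)).
  unfold is_domin in Hd.
  intros e He.
  set (W := Rabs w1 + Rabs w2 + 1).
  assert (HW : 0 < W) by (unfold W; pose proof (Rabs_pos w1); pose proof (Rabs_pos w2); lra).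
  specialize (Hd (mkposreal (e / (2*W)) ltac:(apply Rdiv_lt_0_compat; lra))).
  destruct Hd as [d Hd].
  simpl in Hd.
  unfold ball in Hd; simpl in Hd.
  unfold prod_ball, AbsRing_ball in Hd; simpl in Hd.
  unfold norm, minus, plus, opp, scal in Hd; simpl in Hd.
  assert (Habs : forall x : C, abs x = Cmod x) by reflexivity.
  assert (Hd0 : 0 < d / W) by (apply Rdiv_lt_0_compat; [apply cond_pos | lra]).
  exists (mkposreal (d/W) Hd0). simpl. intros h Hh0 Hh.
  assert (Hu : Cmod (h*w1, h*w2) <= Rabs h * W).
  { eapply Rle_trans; [apply Cmod_le_sum|]. simpl. rewrite !Rabs_mult. unfold W.
    pose proof (Rabs_pos h); nra. }
  specialize (Hd (p1+(t0+h)*w1, p2+(t0+h)*w2)).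
  assert (Heq : Cplus ((p1 + (t0+h)*w1)%R, (p2 + (t0+h)*w2)%R) (Copp ((p1 + t0 * w1)%R, (p2 + t0 * w2)%R))
     = ((h*w1)%R, (h*w2)%R)) by (unfold Cplus, Copp; simpl; f_equal; ring).
  rewrite Heq in Hd.
  rewrite !Habs in Hd.
  assert (Hhp : 0 < Rabs h) by (apply Rabs_pos_lt; auto).
  assert (Hb : Cmod (h*w1, h*w2) < d).
  { eapply Rle_lt_trans; [apply Hu|]. 
    apply (Rmult_lt_compat_r W) in Hh; [|lra]. unfold Rdiv in Hh. rewrite Rmult_assoc, Rinv_l in Hh; lra. }
  specialize (Hd Hb).
  pose proof (Hpi (Cplus (Cplus (f (p1 + (t0 + h) * w1, p2 + (t0 + h) * w2)) (Copp (f (p1 + t0 * w1, p2 + t0 * w2)))) (Copp (Cmult (h*w1, h*w2) l)))) as H1.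
  rewrite Hlin in H1.
  assert (Hm : forall a b : C, @mult C_Ring a b = Cmult a b) by reflexivity.
  rewrite Hm in Hd.
  set (A := pi (f (p1 + (t0 + h) * w1, p2 + (t0 + h) * w2)) - pi (f (p1 + t0 * w1, p2 + t0 * w2))) in *.
  replace (A / h - L) with ((A - h * L) / h) by (field; auto).
  unfold Rdiv. rewrite Rabs_mult, Rabs_inv.
  apply (Rmult_lt_reg_r (Rabs h)); auto.
  rewrite Rmult_assoc, Rinv_l by lra. rewrite Rmult_1_r.
  assert (Hq : e / (2*W) * Cmod (h*w1, h*w2) <= e/2 * Rabs h).
  { apply Rle_trans with (e/(2*W) * (Rabs h * W)).
    apply Rmult_le_compat_l; [|exact Hu]. apply Rlt_le, Rdiv_lt_0_compat; lra.
    right; field; lra. }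
  assert (e/2*Rabs h < e * Rabs h) by nra.
  fold A. lra.
Qed.
Lemma cs_ineq (a b c d : R) : a*c + b*d <= sqrt (a*a+b*b) * sqrt (c*c+d*d).
Proof.
  rewrite <- sqrt_mult by nra.
  destruct (Rle_dec (a*c+b*d) 0). { pose proof (sqrt_pos ((a * a + b * b) * (c * c + d * d))); lra. }
  rewrite <- (sqrt_Rsqr (a*c+b*d)) by lra.
  apply sqrt_le_1_alt. pose proof (Rle_0_sqr (a*d-b*c)). unfold Rsqr in *. nra.
Qed.

Lemma gronwall (u1 u2 du1 du2 : R -> R) (K : R) :
 (forall t, 0 <= t <= 1 -> derivable_pt_lim u1 t (du1 t) /\ derivable_pt_lim u2 t (du2 t)) ->
 (forall t, 0 <= t <= 1 -> sqrt (du1 t * du1 t + du2 t * du2 t) <= K * sqrt (u1 t * u1 t + u2 t * u2 t)) ->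
 sqrt (u1 1 * u1 1 + u2 1 * u2 1) <= exp K * sqrt (u1 0 * u1 0 + u2 0 * u2 0).
Proof.
  intros Hd Hb.
  set (Phi := fun t => (u1 t * u1 t + u2 t * u2 t) * exp (-(2*K)*t)).
  set (dPhi := fun t => (du1 t * u1 t + u1 t * du1 t + (du2 t * u2 t + u2 t * du2 t)) * exp (-(2*K)*t)
                 + (u1 t * u1 t + u2 t * u2 t) * (exp (-(2*K)*t) * (-(2*K) * 1))).
  assert (HD : forall t, 0 <= t <= 1 -> derivable_pt_lim Phi t (dPhi t)).
  { intros t Ht. destruct (Hd t Ht) as [H1 H2]. unfold Phi, dPhi.
    apply (derivable_pt_lim_mult (fun t => u1 t * u1 t + u2 t * u2 t) (fun t => exp (-(2*K)*t))).
    apply (derivable_pt_lim_plus (fun t => u1 t * u1 t) (fun t => u2 t * u2 t)).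
    apply (derivable_pt_lim_mult u1 u1); auto.
    apply (derivable_pt_lim_mult u2 u2); auto.
    apply (derivable_pt_lim_comp (fun t => -(2*K)*t) exp).
    apply (derivable_pt_lim_scal id). apply derivable_pt_lim_id.
    apply derivable_pt_lim_exp. }
  destruct (MVT_cor2 Phi dPhi 0 1 ltac:(lra) HD) as [c [Hc Hc']].
  assert (Hneg : dPhi c <= 0).
  { unfold dPhi. pose proof (exp_pos (-(2*K)*c)).
    assert (Hcs := cs_ineq (u1 c) (u2 c) (du1 c) (du2 c)).
    specialize (Hb c ltac:(lra)).
    pose proof (sqrt_pos (u1 c * u1 c + u2 c * u2 c)).
    assert (Hsq := sqrt_sqrt (u1 c * u1 c + u2 c * u2 c) ltac:(nra)).
    assert (Hm : sqrt (u1 c * u1 c + u2 c * u2 c) * sqrt (du1 c * du1 c + du2 c * du2 c) <= sqrt (u1 c * u1 c + u2 c * u2 c) * (K * sqrt (u1 c * u1 c + u2 c * u2 c))) by (apply Rmult_le_compat_l; auto).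
    assert (u1 c * du1 c + u2 c * du2 c <= K * (u1 c * u1 c + u2 c * u2 c)).
    { rewrite <- Hsq. nra. }
    nra. }
  unfold Phi in Hc. rewrite Rmult_0_r, exp_0, Rmult_1_r in Hc.
  replace (-(2*K)*1) with (-(2*K)) in Hc by ring.
  assert (Hq : (u1 1 * u1 1 + u2 1 * u2 1) <= exp K * exp K * (u1 0 * u1 0 + u2 0 * u2 0)).
  { assert (Hp : exp K * exp K * exp (-(2*K)) = 1).
    { rewrite <- !exp_plus. replace (K + K + -(2*K)) with 0 by ring. apply exp_0. }
    pose proof (exp_pos K). pose proof (exp_pos (-(2*K))). nra. }
  rewrite <- (sqrt_Rsqr (exp K)) by (apply Rlt_le, exp_pos).
  rewrite <- sqrt_mult by (unfold Rsqr; nra).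
  apply sqrt_le_1_alt. unfold Rsqr. lra.
Qed.

Lemma seg_fst (f : C -> C) (l : C) (p1 p2 w1 w2 t0 : R) :
  @is_derive C_AbsRing C_NormedModule f (p1 + t0*w1, p2 + t0*w2) l ->
  derivable_pt_lim (fun t => fst (f (p1 + t*w1, p2+t*w2))) t0 (fst l * w1 - snd l * w2).
Proof.
  apply seg_gen.
  - intros x. apply re_le_Cmod.
  - intros F F0 h. destruct F, F0, l; simpl. ring.
Qed.

Lemma seg_snd (f : C -> C) (l : C) (p1 p2 w1 w2 t0 : R) :
  @is_derive C_AbsRing C_NormedModule f (p1 + t0*w1, p2 + t0*w2) l ->
  derivable_pt_lim (fun t => snd (f (p1 + t*w1, p2+t*w2))) t0 (fst l * w2 + snd l * w1).
Proof.
  apply seg_gen.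
  - intros x. eapply Rle_trans; [|apply Rmax_Cmod]. apply Rmax_r.
  - intros F F0 h. destruct F, F0, l; simpl. ring.
Qed.

Lemma Cmod_sq (z : C) : Cmod z = sqrt (fst z * fst z + snd z * snd z).
Proof. unfold Cmod. f_equal. ring. Qed.

Lemma cosh_ge1 d : 1 <= cosh d.
Proof.
  unfold cosh. pose proof (exp_pos d). rewrite exp_Ropp.
  assert (exp d + / exp d - 2 = (exp d - 1)^2 / exp d) by (field; lra).
  assert (0 <= (exp d - 1)^2 / exp d) by (apply Rdiv_le_0_compat; [apply pow2_ge_0|lra]). lra.
Qed.

Lemma sinh_pos d : 0 < d -> 0 < sinh d.
Proof. intros H. rewrite <- sinh_0. apply sinh_lt. auto. Qed.

Lemma cosh_mono z d : 0 <= z <= d -> cosh z <= cosh d.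
Proof.
  intros H. unfold cosh. rewrite !exp_Ropp.
  assert (Hz : 1 <= exp z) by (rewrite <- exp_0; destruct (Req_dec z 0); [subst; lra| apply Rlt_le, exp_increasing; lra]).
  assert (Hd : exp z <= exp d) by (destruct (Req_dec z d); [subst; lra| apply Rlt_le, exp_increasing; lra]).
  assert (exp d + / exp d - (exp z + / exp z) = (exp d - exp z) * (exp z * exp d - 1) / (exp z * exp d)) by (field; lra).
  assert (0 <= (exp d - exp z) * (exp z * exp d - 1) / (exp z * exp d)).
  { apply Rdiv_le_0_compat; [|nra]. apply Rmult_le_pos; nra. }
  lra.
Qed.

Lemma sinh_mono z d : z <= d -> sinh z <= sinh d.
Proof. intros H. destruct (Req_dec z d); [subst; lra| apply Rlt_le, sinh_lt; lra]. Qed.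

Lemma cosh_sinh z : cosh z + sinh z = exp z.
Proof. unfold cosh, sinh. field. Qed.

Lemma lam_bound d z : 0 < d -> Lambda d z -> Rabs (fst z) <= cosh d /\ Rabs (snd z) <= sinh d.
Proof.
  intros Hd H. unfold Lambda, Re, Im in H.
  pose proof (cosh_ge1 d). pose proof (sinh_pos d Hd).
  set (u := fst z / cosh d) in *. set (w := snd z / sinh d) in *.
  assert (fst z = u * cosh d) by (unfold u; field; lra).
  assert (snd z = w * sinh d) by (unfold w; field; lra).
  assert (-1 <= u <= 1) by nra. assert (-1 <= w <= 1) by nra.
  split; apply Rabs_le; nra.
Qed.

Lemma lam_real d x : 0 < d -> -1 <= x <= 1 -> Lambda d (x, 0).
Proof.
  intros Hd Hx. unfold Lambda, Re, Im; simpl.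
  pose proof (cosh_ge1 d). pose proof (sinh_pos d Hd).
  replace (0 / sinh d) with 0 by (field; lra).
  assert (-1 <= x / cosh d <= 1).
  { split; [apply (Rmult_le_reg_r (cosh d)) | apply (Rmult_le_reg_r (cosh d))]; try lra;
    unfold Rdiv; rewrite Rmult_assoc, Rinv_l by lra; lra. }
  nra.
Qed.

Lemma lam_mono z d w : 0 < z <= d -> Lambda z w -> Lambda d w.
Proof.
  intros Hz H. unfold Lambda, Re, Im in *.
  pose proof (cosh_ge1 z). pose proof (sinh_pos z ltac:(lra)).
  pose proof (cosh_mono z d ltac:(lra)). pose proof (sinh_mono z d ltac:(lra)).
  assert (Hc : (fst w / cosh d)^2 <= (fst w / cosh z)^2).
  { unfold Rdiv. rewrite !Rpow_mult_distr. apply Rmult_le_compat_l; [nra|].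
    assert (/ cosh d <= / cosh z) by (apply Rinv_le_contravar; lra).
    assert (0 < / cosh d) by (apply Rinv_0_lt_compat; lra). nra. }
  assert (Hs : (snd w / sinh d)^2 <= (snd w / sinh z)^2).
  { unfold Rdiv. rewrite !Rpow_mult_distr. apply Rmult_le_compat_l; [nra|].
    assert (/ sinh d <= / sinh z) by (apply Rinv_le_contravar; lra).
    assert (0 < / sinh d) by (apply Rinv_0_lt_compat; lra). nra. }
  lra.
Qed.

Lemma lam_conv d p q t : 0 < d -> Lambda d p -> Lambda d q -> 0 <= t <= 1 ->
  Lambda d (fst p + t * (fst q - fst p), snd p + t * (snd q - snd p)).
Proof.
  intros Hd Hp Hq Ht. unfold Lambda, Re, Im in *; cbn [fst snd].
  pose proof (cosh_ge1 d). pose proof (sinh_pos d Hd).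
  set (u1 := fst p / cosh d) in *. set (u2 := fst q / cosh d) in *.
  set (w1 := snd p / sinh d) in *. set (w2 := snd q / sinh d) in *.
  replace ((fst p + t * (fst q - fst p)) / cosh d) with (u1 + t * (u2 - u1)) by (unfold u1, u2; field; lra).
  replace ((snd p + t * (snd q - snd p)) / sinh d) with (w1 + t * (w2 - w1)) by (unfold w1, w2; field; lra).
  assert (E : (u1 + t * (u2 - u1)) ^ 2 + (w1 + t * (w2 - w1)) ^ 2
    = (1 - t) * (u1^2 + w1^2) + t * (u2^2 + w2^2) - t * (1 - t) * ((u1 - u2)^2 + (w1 - w2)^2)) by ring.
  rewrite E.
  assert (0 <= t * (1 - t) * ((u1 - u2)^2 + (w1 - w2)^2)).
  { apply Rmult_le_pos; [nra|apply Rplus_le_le_0_compat; apply pow2_ge_0]. }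
  nra.
Qed.

Lemma locally_int (c : R) : -1 < c < 1 -> locally c (fun t => -1 < t < 1).
Proof.
  intros Hc.
  assert (Hr : 0 < Rmin (c + 1) (1 - c)) by (apply Rmin_pos; lra).
  exists (mkposreal _ Hr). intros t Ht.
  unfold ball in Ht; simpl in Ht; unfold AbsRing_ball, abs, minus, plus, opp in Ht; simpl in Ht.
  pose proof (Rmin_l (c + 1) (1 - c)). pose proof (Rmin_r (c + 1) (1 - c)).
  destruct (Rabs_def2 _ _ Ht). lra.
Qed.

Lemma d1_real_bound (v : R -> R) (vC d1 : C -> C) delta A B :
  0 < delta -> (forall x, -1 <= x <= 1 -> vC (RtoC x) = RtoC (v x)) ->
  (forall y, -1 <= y <= 1 -> A <= v y <= B) ->
  (forall z, Lambda delta z -> @is_derive C_AbsRing C_NormedModule vC z (d1 z)) ->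
  exists c, -1 < c < 1 /\ Cmod (d1 (c, 0)) <= (B - A) / 2.
Proof.
  intros Hd HvC Hv Hder.
  assert (HvR : forall x, -1 <= x <= 1 -> vC (x, 0) = (v x, 0)) by (intros; apply HvC; auto).
  assert (Hpt : forall t, (0 + t*1, 0 + t*0) = (t, 0)) by (intros; f_equal; ring).
  set (g := fun t => fst (vC (0 + t*1, 0 + t*0))).
  set (g' := fun t => fst (d1 (t,0)) * 1 - snd (d1 (t,0)) * 0).
  assert (HD : forall t, -1 <= t <= 1 -> derivable_pt_lim g t (g' t)).
  { intros t Ht. unfold g, g'. apply seg_fst. rewrite Hpt. apply Hder. apply lam_real; auto. }
  destruct (MVT_cor2 g g' (-1) 1 ltac:(lra) HD) as [c [Hc Hc']].
  exists c. split; auto.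
  assert (Hsnd : snd (d1 (c, 0)) = 0).
  { assert (Hk := seg_snd vC (d1 (c,0)) 0 0 1 0 c).
    rewrite Hpt in Hk. specialize (Hk (Hder _ (lam_real delta c Hd ltac:(lra)))).
    apply is_derive_Reals in Hk.
    apply (is_derive_ext_loc _ (fun _ => 0)) in Hk.
    - apply is_derive_unique in Hk. rewrite Derive_const in Hk. lra.
    - apply (filter_imp (fun t => -1 < t < 1)); [|apply locally_int; lra].
      intros t Ht. rewrite Hpt, HvR by lra. reflexivity. }
  unfold g, g' in Hc. rewrite !Hpt in Hc. rewrite !HvR in Hc by lra. simpl in Hc.
  rewrite Cmod_sq, Hsnd. replace (fst (d1 (c, 0)) * fst (d1 (c, 0)) + 0 * 0) with (Rsqr (fst (d1 (c, 0)))) by (unfold Rsqr; ring).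
  rewrite sqrt_Rsqr_abs.
  destruct (Hv 1 ltac:(lra)). destruct (Hv (-1) ltac:(lra)).
  apply Rabs_le. lra.
Qed.

Lemma exp_mono x y : x <= y -> exp x <= exp y.
Proof. intros H. destruct (Req_dec x y); [subst; lra| apply Rlt_le, exp_increasing; lra]. Qed.

Lemma d1_bound (v : R -> R) (vC d1 d2 : C -> C) delta M A B :
  0 < delta -> (forall x, -1 <= x <= 1 -> vC (RtoC x) = RtoC (v x)) ->
  (forall y, -1 <= y <= 1 -> A <= v y <= B) ->
  (forall z, Lambda delta z -> @is_derive C_AbsRing C_NormedModule vC z (d1 z) /\
                               @is_derive C_AbsRing C_NormedModule d1 z (d2 z)) ->
  (forall z, Lambda delta z -> d1 z <> RtoC 0 /\ Cmod (Cdiv (d2 z) (d1 z)) <= M) ->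
  forall w, Lambda delta w -> Cmod (d1 w) <= exp (Rabs M * (cosh delta + sinh delta + 1)) * ((B - A) / 2).
Proof.
  intros Hd HvC Hv Hder HM w Hw.
  destruct (d1_real_bound v vC d1 delta A B Hd HvC Hv) as [c [Hc Hc']].
  { intros z Hz. apply Hder; auto. }
  assert (Hin : forall t, 0 <= t <= 1 -> Lambda delta (c + t * (fst w - c), 0 + t * (snd w - 0))).
  { intros t Ht. pose proof (lam_conv delta (c, 0) w t Hd (lam_real delta c Hd ltac:(lra)) Hw Ht) as H.
    simpl in H. exact H. }
  set (W1 := fst w - c). set (W2 := snd w - 0).
  assert (HM' : forall z, Lambda delta z -> Cmod (d2 z) <= Rabs M * Cmod (d1 z)).
  { intros z Hz. destruct (HM z Hz) as [Hn Hb].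
    rewrite Cmod_div in Hb by auto.
    assert (Hp : 0 < Cmod (d1 z)) by (apply Cmod_gt_0; auto).
    apply (Rmult_le_compat_r (Cmod (d1 z))) in Hb; [|lra].
    unfold Rdiv in Hb. rewrite Rmult_assoc, Rinv_l in Hb by lra.
    pose proof (Rle_abs M). nra. }
  assert (HG := gronwall (fun t => fst (d1 (c + t * W1, 0 + t * W2))) (fun t => snd (d1 (c + t * W1, 0 + t * W2)))
     (fun t => fst (d2 (c + t * W1, 0 + t * W2)) * W1 - snd (d2 (c + t * W1, 0 + t * W2)) * W2)
     (fun t => fst (d2 (c + t * W1, 0 + t * W2)) * W2 + snd (d2 (c + t * W1, 0 + t * W2)) * W1)
     (Rabs M * Cmod (W1, W2))).
  assert (Hw1 : forall t, 0 <= t <= 1 -> Cmod (d1 (c + t * W1, 0 + t * W2)) = sqrt (fst (d1 (c + t * W1, 0 + t * W2)) * fst (d1 (c + t * W1, 0 + t * W2)) + snd (d1 (c + t * W1, 0 + t * W2)) * snd (d1 (c + t * W1, 0 + t * W2)))) by (intros; apply Cmod_sq).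
  simpl in HG.
  assert (HG' : sqrt (fst (d1 (c + 1 * W1, 0 + 1 * W2)) * fst (d1 (c + 1 * W1, 0 + 1 * W2)) + snd (d1 (c + 1 * W1, 0 + 1 * W2)) * snd (d1 (c + 1 * W1, 0 + 1 * W2))) <=
     exp (Rabs M * Cmod (W1, W2)) * sqrt (fst (d1 (c + 0 * W1, 0 + 0 * W2)) * fst (d1 (c + 0 * W1, 0 + 0 * W2)) + snd (d1 (c + 0 * W1, 0 + 0 * W2)) * snd (d1 (c + 0 * W1, 0 + 0 * W2)))).
  { apply HG.
    - intros t Ht. destruct (Hder _ (Hin t Ht)) as [_ H2]. split.
      + apply seg_fst. exact H2.
      + apply seg_snd. exact H2.
    - intros t Ht.
      assert (E : sqrt (
        (fst (d2 (c + t * W1, 0 + t * W2)) * W1 - snd (d2 (c + t * W1, 0 + t * W2)) * W2) *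
        (fst (d2 (c + t * W1, 0 + t * W2)) * W1 - snd (d2 (c + t * W1, 0 + t * W2)) * W2) +
        (fst (d2 (c + t * W1, 0 + t * W2)) * W2 + snd (d2 (c + t * W1, 0 + t * W2)) * W1) *
        (fst (d2 (c + t * W1, 0 + t * W2)) * W2 + snd (d2 (c + t * W1, 0 + t * W2)) * W1))
        = Cmod (Cmult (d2 (c + t * W1, 0 + t * W2)) (W1, W2))).
      { rewrite Cmod_sq. f_equal; simpl; ring. }
      rewrite E, Cmod_mult, <- Cmod_sq.
      specialize (HM' _ (Hin t Ht)). pose proof (Cmod_ge_0 (W1, W2)).
      pose proof (Rabs_pos M). pose proof (Cmod_ge_0 (d2 (c + t * W1, 0 + t * W2))). rewrite (Rmult_comm (Rabs M) (Cmod (W1, W2))), Rmult_assoc, (Rmult_comm (Cmod (W1, W2))). apply Rmult_le_compat_r; auto. }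
  rewrite <- !Cmod_sq in HG'.
  replace ((c + 1 * W1)%R, (0 + 1 * W2)%R) with w in HG' by (unfold W1, W2; destruct w; simpl; f_equal; ring).
  replace ((c + 0 * W1)%R, (0 + 0 * W2)%R) with ((c, 0) : C) in HG' by (f_equal; ring).
  eapply Rle_trans; [exact HG'|].
  apply Rmult_le_compat; try apply Rlt_le, exp_pos; try apply Cmod_ge_0; auto.
  apply exp_mono. apply Rmult_le_compat_l; [apply Rabs_pos|].
  eapply Rle_trans; [apply Cmod_le_sum|]. simpl.
  destruct (lam_bound delta w Hd Hw).
  unfold W1, W2. rewrite Rminus_0_r.
  assert (Rabs (fst w - c) <= Rabs (fst w) + Rabs c) by (unfold Rminus; eapply Rle_trans; [apply Rabs_triang| rewrite Rabs_Ropp; lra]).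
  assert (Rabs c <= 1) by (apply Rabs_le; lra). lra.
Qed.

Lemma clamp_bound (X c : R) : Rabs X <= c -> 1 <= c ->
  -1 <= Rmax (-1) (Rmin 1 X) <= 1 /\ Rabs (X - Rmax (-1) (Rmin 1 X)) <= c - 1.
Proof.
  intros H Hc. apply Rabs_le_between in H.
  unfold Rmax, Rmin. destruct (Rle_dec 1 X); destruct (Rle_dec X 1); destruct (Rle_dec (-1) 1); destruct (Rle_dec (-1) X);
  try lra; split; try lra; apply Rabs_le; lra.
Qed.

Lemma re_bound (v : R -> R) (vC d1 d2 : C -> C) delta zeta Dd :
  0 < zeta <= delta -> (forall x, -1 <= x <= 1 -> vC (RtoC x) = RtoC (v x)) ->
  (forall z, Lambda delta z -> @is_derive C_AbsRing C_NormedModule vC z (d1 z)) ->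
  (forall w, Lambda delta w -> Cmod (d1 w) <= Dd) ->
  forall z, Lambda zeta z ->
  Rabs (fst (vC z) - v (Rmax (-1) (Rmin 1 (fst z)))) <= Dd * (exp zeta - 1).
Proof.
  intros Hz HvC Hder HDd z Hzz.
  destruct (lam_bound zeta z ltac:(lra) Hzz) as [Hb1 Hb2].
  destruct (clamp_bound (fst z) (cosh zeta) Hb1 (cosh_ge1 zeta)) as [Hx Hxz].
  set (x := Rmax (-1) (Rmin 1 (fst z))) in *.
  assert (Hin : forall t, 0 <= t <= 1 -> Lambda delta (x + t * (fst z - x), 0 + t * (snd z - 0))).
  { intros t Ht. apply (lam_mono zeta); auto.
    pose proof (lam_conv zeta (x, 0) z t ltac:(lra) (lam_real zeta x ltac:(lra) Hx) Hzz Ht) as H.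
    simpl in H. exact H. }
  set (W1 := fst z - x) in *. set (W2 := snd z - 0) in *.
  set (g := fun t => fst (vC (x + t * W1, 0 + t * W2))).
  set (g' := fun t => fst (d1 (x + t * W1, 0 + t * W2)) * W1 - snd (d1 (x + t * W1, 0 + t * W2)) * W2).
  destruct (MVT_cor2 g g' 0 1 ltac:(lra)) as [c [Hc Hc']].
  { intros t Ht. unfold g, g'. apply seg_fst. apply Hder. apply Hin. auto. }
  unfold g in Hc.
  replace ((x + 1 * W1)%R, (0 + 1 * W2)%R) with z in Hc by (unfold W1, W2; destruct z; simpl; f_equal; ring).
  replace ((x + 0 * W1)%R, (0 + 0 * W2)%R) with (RtoC x) in Hc by (unfold RtoC; f_equal; ring).
  rewrite HvC in Hc by auto. simpl in Hc.
  rewrite Hc, Rminus_0_r, Rmult_1_r.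
  unfold g'.
  assert (E : fst (d1 (x + c * W1, 0 + c * W2)) * W1 - snd (d1 (x + c * W1, 0 + c * W2)) * W2
             = Re (Cmult (d1 (x + c * W1, 0 + c * W2)) (W1, W2))) by (unfold Re; simpl; ring).
  rewrite E. eapply Rle_trans; [apply re_le_Cmod|]. rewrite Cmod_mult.
  apply Rmult_le_compat; try apply Cmod_ge_0.
  - apply HDd. apply Hin. lra.
  - eapply Rle_trans; [apply Cmod_le_sum|]. simpl. unfold W2. rewrite Rminus_0_r.
    rewrite <- cosh_sinh. lra.
Qed.

Lemma fst_T (u : C) (tau : R) : tau <> 0 ->
  fst (Cminus (RtoC 1) (Cdiv u (RtoC tau))) = 1 - fst u / tau.
Proof.
  intros H. destruct u as [u1 u2]. unfold Cminus, Cdiv, Cmult, Cinv, Cplus, Copp, RtoC; simpl. field. auto.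
Qed.

Theorem lemma8 (I : Type) (a b : I -> R) (f : R -> R) (fh v : I -> R -> R) (Xi : R) :
  UNP a b f fh v ->
  spacing_const a b Xi ->
  (forall (i : I) (s : R), (s = 1 \/ s = -1) -> v i s <> 1 -> v i s <> -1 ->
     forall x, -1 <= x <= 1 -> (b i - a i) / Xi <= T v i s x) /\
  (forall (delta : R) (vC : I -> C -> C), 0 < delta -> AD v vC delta ->
     exists zeta, 0 < zeta <= delta /\ exists K, 0 < K /\
       forall (i : I) (s : R), (s = 1 \/ s = -1) -> v i s <> 1 -> v i s <> -1 ->
       forall z, Lambda zeta z ->
         K * (b i - a i) <= Cmod (Cminus (RtoC 1) (Cdiv (vC i z) (RtoC (tau v i s))))).
Proof.
  intros HU HS.
  destruct HU as [_ [Hab [_ [_ [_ [HC2 [Hbij [Hv [[M0 HM0] _]]]]]]]]].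
  assert (P1 : forall (i : I) (s : R), (s = 1 \/ s = -1) -> v i s <> 1 -> v i s <> -1 ->
     forall x, -1 <= x <= 1 -> (b i - a i) / Xi <= T v i s x).
  { intros i s Hs Hv1 Hv2 x Hx. unfold T, tau.
    destruct (Hab i) as [Ha1 [Hab' Hb1]].
    destruct (Hbij i) as [Hrng [Hinj _]].
    destruct (HC2 i) as [g1 [g2 [_ Hcw]]].
    assert (Hd' : forall y, -1 < y < 1 -> ex_derive (v i) y /\ ex_derive (Derive (v i)) y /\ Derive (v i) y <> 0).
    { intros y Hy. destruct (HM0 i y Hy) as [H1 [H2 [H3 _]]]. auto. }
    exact (@part1_one I a b Xi i (fh i) (v i) s HS Hab' (fun y Hy => Hv i y Hy) Hinj Hrng
       (fun y Hy => proj1 (Hcw y Hy)) Hd' Hs Hv1 Hv2 Ha1 Hb1 x Hx). }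
  split; [exact P1|].
  intros delta vC Hd [HvC [d1 [d2 [HU' [M HM2]]]]].
  assert (HXi : 0 < Xi).
  { destruct (classic (exists r, spacing_ratios a b r)) as [[r [i [s [Hs [Hn _]]]]]|Hne].
    - destruct (Hab i) as [_ [Hab' _]]. apply (@ratio I a b Xi i s HS Hs Hn Hab').
    - exfalso. destruct HS as [_ Hl].
      assert (Xi <= Xi - 1); [|lra].
      apply Hl. intros r Hr. exfalso. apply Hne. exists r; auto. }
  set (G := exp (Rabs M * (cosh delta + sinh delta + 1)) / 2).
  assert (HG : 0 < G) by (unfold G; pose proof (exp_pos (Rabs M * (cosh delta + sinh delta + 1))); lra).
  set (eps := 1 / (2 * Xi * G)).
  assert (Heps : 0 < eps) by (unfold eps; apply Rdiv_lt_0_compat; [lra| nra]).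
  assert (Hl : 0 < ln (1 + eps)) by (rewrite <- ln_1; apply ln_increasing; lra).
  exists (Rmin delta (ln (1 + eps))). split.
  { split; [apply Rmin_pos; lra| apply Rmin_l]. }
  set (zeta := Rmin delta (ln (1 + eps))).
  assert (Hz : 0 < zeta <= delta) by (split; [apply Rmin_pos; lra| apply Rmin_l]).
  assert (Hez : exp zeta - 1 <= eps).
  { assert (exp zeta <= exp (ln (1 + eps))) by (apply exp_mono; apply Rmin_r).
    rewrite exp_ln in H by lra. lra. }
  exists (1 / (2 * Xi)). split; [apply Rdiv_lt_0_compat; lra|].
  intros i s Hs Hv1 Hv2 z Hzz.
  destruct (HU' i) as [U [_ [HLU HUd]]].
  assert (Hder : forall z, Lambda delta z -> @is_derive C_AbsRing C_NormedModule (vC i) z (d1 i z) /\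
                               @is_derive C_AbsRing C_NormedModule (d1 i) z (d2 i z)) by (intros; apply HUd, HLU; auto).
  assert (HvR : forall y, -1 <= y <= 1 -> a i <= v i y <= b i) by (intros; apply Hv; auto).
  pose proof (d1_bound (v i) (vC i) (d1 i) (d2 i) delta M (a i) (b i) Hd (HvC i) HvR Hder (HM2 i)) as HDd.
  pose proof (re_bound (v i) (vC i) (d1 i) (d2 i) delta zeta _ Hz (HvC i) (fun z Hz => proj1 (Hder z Hz)) HDd z Hzz) as HR.
  destruct (lam_bound zeta z ltac:(lra) Hzz) as [Hb1 _].
  destruct (clamp_bound (fst z) (cosh zeta) Hb1 (cosh_ge1 zeta)) as [Hx _].
  set (x := Rmax (-1) (Rmin 1 (fst z))) in *.
  pose proof (P1 i s Hs Hv1 Hv2 x Hx) as HT. unfold T in HT.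
  assert (Htau : tau v i s = 1 \/ tau v i s = -1).
  { unfold tau. destruct (HM0 i 0 ltac:(lra)) as [_ [_ [HD0 _]]].
    unfold sgn. destruct (Rlt_dec 0 (Derive (v i) 0)).
    - destruct Hs as [-> | ->]; [left|right]; ring.
    - destruct (Rlt_dec (Derive (v i) 0) 0).
      + destruct Hs as [-> | ->]; [right|left]; ring.
      + exfalso. apply HD0. lra. }
  assert (Htn : tau v i s <> 0) by (destruct Htau as [-> | ->]; lra).
  eapply Rle_trans; [|apply re_le_Cmod]. unfold Re. rewrite fst_T by auto.
  destruct (Hab i) as [_ [Hab' _]].
  assert (HDe : exp (Rabs M * (cosh delta + sinh delta + 1)) * ((b i - a i) / 2) * (exp zeta - 1) <= (b i - a i) / (2 * Xi)).
  { apply Rle_trans with (exp (Rabs M * (cosh delta + sinh delta + 1)) * ((b i - a i) / 2) * eps).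
    - apply Rmult_le_compat_l; auto. apply Rmult_le_pos; [apply Rlt_le, exp_pos | lra].
    - right. unfold eps, G. field. split; [lra|]. pose proof (exp_pos (Rabs M * (cosh delta + sinh delta + 1))). lra. }
  set (Y := fst (vC i z)) in *. set (V := v i x) in *.
  assert (Hdiff : 1 - Y / tau v i s = (1 - V / tau v i s) - (Y - V) / tau v i s) by (field; auto).
  assert (Habs : Rabs ((Y - V) / tau v i s) = Rabs (Y - V)).
  { unfold Rdiv. rewrite Rabs_mult, Rabs_inv. destruct Htau as [-> | ->]; [rewrite Rabs_R1 | rewrite Rabs_m1]; field. }
  rewrite Hdiff.
  assert (Hle : (b i - a i) / Xi - (b i - a i) / (2 * Xi) = 1 / (2 * Xi) * (b i - a i)) by (field; lra).
  assert (Hpos : 0 <= 1 / (2 * Xi) * (b i - a i)) by (apply Rmult_le_pos; [apply Rlt_le, Rdiv_lt_0_compat; lra| lra]).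
  pose proof (Rabs_triang_inv (1 - V / tau v i s) ((Y - V) / tau v i s)).
  pose proof (Rle_abs (1 - V / tau v i s)).
  lra.
Qed.
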